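(* Let $G$ and $H$ be graphs without isolated vertices. If $K_2\times G$ and $K_2\times H$ are isomorphic as graphs, then the neighborhood complexes $N(G)$ and $N(H)$ are isomorphic as simplicial complexes. If moreover $G$ and $H$ are locally finite and stiff, then conversely $N(G)\cong N(H)$ implies $K_2\times G\cong K_2\times H$.
   Context: A graph $G$ is a set $V(G)$ together with a symmetric subset $E(G) \subset V(G)\times V(G)$ (undirected, no multiple edges, loops allowed; graphs may be infinite). For $v \in V(G)$, $N(v)=\{w : (v,w)\in E(G)\}$; $v$ is isolated if $N(v)=\emptyset$. $G$ is locally finite if every $N(v)$ is finite. $G$ is stiff if for vertices $v,w$, $N(v)\subset N(w)$ implies $v=w$. $K_2$ is the graph with $V(K_2)=\{1,2\}$ and edges $(1,2),(2,1)$. The tensor product $G\times H$ has vertex set $V(G)\times V(H)$, with $((x,y),(x',y'))$ an edge iff $(x,x')\in E(G)$ and $(y,y')\in E(H)$. The neighborhood complex $N(G)$ is the abstract simplicial complex whose vertices are the non-isolated vertices of $G$ and whose simplices are the finite subsets contained in $N(v)$ for some vertex $v$. *)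

(* Defs.v *)
(* graphs may be infinite, so vertex sets are arbitrary Types. *)
From Stdlib Require Import List.
Import ListNotations.

(* A graph: vertex type with a symmetric edge relation (loops allowed). *)
Record graph : Type := Graph {
  vert : Type;
  adj : vert -> vert -> Prop;
  adj_sym : forall x y, adj x y -> adj y x
}.

Definition isolated (G : graph) (v : vert G) : Prop :=
  forall w, ~ adj G v w.

Definition no_isolated (G : graph) : Prop :=
  forall v : vert G, ~ isolated G v.

Definition locally_finite (G : graph) : Prop :=
  forall v : vert G, exists l : list (vert G), forall w, adj G v w -> In w l.

Definition stiff (G : graph) : Prop :=
  forall v w : vert G, (forall x, adj G v x -> adj G w x) -> v = w.

Definition K2 : graph.
Proof.
  refine (@Graph bool (fun x y => x <> y) _).
  intros x y H; congruence.
Defined.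

Definition tensor (G H : graph) : graph.
Proof.
  refine (@Graph (vert G * vert H)
            (fun p q => adj G (fst p) (fst q) /\ adj H (snd p) (snd q)) _).
  intros p q [H1 H2]; split; apply adj_sym; assumption.
Defined.

Definition graph_iso (G H : graph) : Prop :=
  exists (f : vert G -> vert H) (g : vert H -> vert G),
    (forall x, g (f x) = x) /\ (forall y, f (g y) = y) /\
    (forall x y, adj G x y <-> adj H (f x) (f y)).

(* Neighborhood complex N(G): vertices are the non-isolated vertices of G;
   simplices are finite subsets (represented by lists, read as their sets of
   elements) contained in N(v) for some vertex v. *)
Definition nc_vertex (G : graph) : Type := { v : vert G | ~ isolated G v }.

Definition nc_simplex (G : graph) (s : list (nc_vertex G)) : Prop :=
  exists v : vert G, forall x, In x s -> adj G v (proj1_sig x).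

Definition nc_iso (G H : graph) : Prop :=
  exists (f : nc_vertex G -> nc_vertex H) (g : nc_vertex H -> nc_vertex G),
    (forall x, g (f x) = x) /\ (forall y, f (g y) = y) /\
    (forall s : list (nc_vertex G), nc_simplex G s <-> nc_simplex H (map f s)).

(* Main.v *)
Require Import Defs.
From Stdlib Require Import List Relations ClassicalEpsilon ProofIrrelevance FunctionalExtensionality PropExtensionality Classical Arith.

Record isod (X Y : graph) := {
  phi : vert X -> vert Y; psi : vert Y -> vert X;
  psi_phi : forall x, psi (phi x) = x; phi_psi : forall y, phi (psi y) = y;
  phi_adj : forall x y, adj X x y <-> adj Y (phi x) (phi y) }.
Arguments phi {X Y} _ _. Arguments psi {X Y} _ _.
Arguments psi_phi {X Y} _ _. Arguments phi_psi {X Y} _ _. Arguments phi_adj {X Y} _ _ _.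

Definition iota {A} (p : bool * A) : bool * A := (negb (fst p), snd p).
Definition CN (X : graph) (p q : vert X) := exists y, adj X p y /\ adj X q y.
Definition sim (X : graph) := clos_refl_sym_trans (vert X) (CN X).

Lemma iota_iota {A} (p : bool * A) : iota (iota p) = p.
Proof. destruct p; unfold iota; simpl; rewrite Bool.negb_involutive; reflexivity. Qed.

Lemma CN_fst G (p q : bool * vert G) : CN (tensor K2 G) p q -> fst p = fst q.
Proof.
  intros [y [[a1 _] [a2 _]]]. destruct p as [b1 v1], q as [b2 v2], y as [b3 v3].
  simpl in *. destruct b1, b2, b3; congruence.
Qed.

Lemma sim_map X Y (m : vert X -> vert Y) :
  (forall p q, CN X p q -> CN Y (m p) (m q)) -> forall p q, sim X p q -> sim Y (m p) (m q).
Proof.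
  intros h p q s. induction s.
  - apply rst_step; auto.
  - apply rst_refl.
  - apply rst_sym; auto.
  - eapply rst_trans; eauto.
Qed.

Lemma sim_fst G (p q : bool * vert G) : sim (tensor K2 G) p q -> fst p = fst q.
Proof.
  intro s. induction s; try congruence. apply CN_fst; auto.
Qed.

Lemma sim_not_iota G (p : bool * vert G) : ~ sim (tensor K2 G) p (iota p).
Proof.
  intro s. apply sim_fst in s. destruct p as [[|] v]; simpl in s; discriminate.
Qed.

Lemma CN_iota G (p q : bool * vert G) : CN (tensor K2 G) p q -> CN (tensor K2 G) (iota p) (iota q).
Proof.
  intros [y [[a1 b1] [a2 b2]]]. exists (iota y).
  destruct p as [x1 v1], q as [x2 v2], y as [x3 v3]; simpl in *.
  split; split; auto; destruct x1, x2, x3; simpl in *; congruence.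
Qed.

Section Dummy. End Dummy.

Definition J {G H : graph} (d : isod (tensor K2 G) (tensor K2 H)) (z : bool * vert G) : bool * vert G :=
  psi d (iota (phi d z)).
Definition T {G H : graph} (d : isod (tensor K2 G) (tensor K2 H)) (z : bool * vert G) : bool * vert G :=
  J d (iota z).
Definition Ti {G H : graph} (d : isod (tensor K2 G) (tensor K2 H)) (z : bool * vert G) : bool * vert G :=
  iota (J d z).

Lemma J_J {G H : graph} (d : isod (tensor K2 G) (tensor K2 H)) (z : bool * vert G) : @J G H d (J d z) = z.
Proof. unfold J. rewrite phi_psi, iota_iota, psi_phi. reflexivity. Qed.
Lemma T_Ti {G H : graph} (d : isod (tensor K2 G) (tensor K2 H)) (z : bool * vert G) : @T G H d (Ti d z) = z.
Proof. unfold T, Ti. rewrite iota_iota, J_J. reflexivity. Qed.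
Lemma Ti_T {G H : graph} (d : isod (tensor K2 G) (tensor K2 H)) (z : bool * vert G) : @Ti G H d (T d z) = z.
Proof. unfold T, Ti. rewrite J_J, iota_iota. reflexivity. Qed.

Lemma CN_phi {G H : graph} (d : isod (tensor K2 G) (tensor K2 H)) p q :
  CN _ p q -> CN _ (phi d p) (phi d q).
Proof. intros [y [a b]]. exists (phi d y). split; apply phi_adj; auto. Qed.
Lemma CN_psi {G H : graph} (d : isod (tensor K2 G) (tensor K2 H)) p q :
  CN _ p q -> CN _ (psi d p) (psi d q).
Proof. intros [y [a b]]. exists (psi d y). split; apply (phi_adj d); rewrite !phi_psi; auto. Qed.

Lemma sim_J {G H : graph} (d : isod (tensor K2 G) (tensor K2 H)) (p q : bool * vert G) : sim (tensor K2 G) p q -> sim (tensor K2 G) (@J G H d p) (J d q).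
Proof.
  apply (sim_map (tensor K2 G) (tensor K2 G)). intros a b h.
  apply CN_psi, CN_iota, CN_phi, h.
Qed.
Lemma sim_T {G H : graph} (d : isod (tensor K2 G) (tensor K2 H)) (p q : bool * vert G) : sim (tensor K2 G) p q -> sim (tensor K2 G) (@T G H d p) (T d q).
Proof. intro h. apply sim_J, (sim_map (tensor K2 G) (tensor K2 G) (@iota (vert G)) (CN_iota G)), h. Qed.
Lemma sim_Ti {G H : graph} (d : isod (tensor K2 G) (tensor K2 H)) (p q : bool * vert G) : sim (tensor K2 G) p q -> sim (tensor K2 G) (@Ti G H d p) (Ti d q).
Proof. intro h. apply (sim_map (tensor K2 G) (tensor K2 G) (@iota (vert G)) (CN_iota G)), sim_J, h. Qed.
Lemma sim_iter {G H : graph} (d : isod (tensor K2 G) (tensor K2 H)) n (p q : bool * vert G) : sim (tensor K2 G) p q ->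
  sim (tensor K2 G) (Nat.iter n (@T G H d) p) (Nat.iter n (T d) q).
Proof. induction n; simpl; auto. intro h. apply sim_T; auto. Qed.
Lemma sim_T_inv {G H : graph} (d : isod (tensor K2 G) (tensor K2 H)) (p q : bool * vert G) : sim (tensor K2 G) (@T G H d p) (T d q) -> sim (tensor K2 G) p q.
Proof. intro h. apply (sim_Ti d) in h. rewrite !Ti_T in h. exact h. Qed.

Lemma sim_not_J {G H : graph} (d : isod (tensor K2 G) (tensor K2 H)) (w : bool * vert G) : ~ sim (tensor K2 G) (@J G H d w) w.
Proof.
  intro h. apply (sim_map _ _ (phi d) (CN_phi d)) in h.
  unfold J in h. rewrite phi_psi in h.
  apply (sim_not_iota H (phi d w)). apply rst_sym. exact h.
Qed.

Lemma L8 {G H : graph} (d : isod (tensor K2 G) (tensor K2 H)) (z : bool * vert G) : @T G H d (iota (T d z)) = iota z.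
Proof. unfold T at 1. rewrite iota_iota. unfold T. apply J_J. Qed.

Lemma L9 {G H : graph} (d : isod (tensor K2 G) (tensor K2 H)) m : forall z : bool * vert G,
  ~ sim (tensor K2 G) (Nat.iter m (@T G H d) z) (iota z) /\ ~ sim (tensor K2 G) (Nat.iter (S m) (T d) z) (iota z).
Proof.
  induction m; intro z.
  - split. + apply sim_not_iota. + simpl. unfold T. apply sim_not_J.
  - split. + apply (proj2 (IHm z)).
    + intro h. rewrite <- (L8 d z) in h.
      change (Nat.iter (S (S m)) (T d) z) with (T d (Nat.iter (S m) (T d) z)) in h.
      apply sim_T_inv in h. rewrite Nat.iter_succ_r in h.
      apply (proj1 (IHm (T d z))). exact h.
Qed.

Lemma L10 {G H : graph} (d : isod (tensor K2 G) (tensor K2 H)) m : forall n (z : bool * vert G),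
  ~ sim (tensor K2 G) (Nat.iter m (@T G H d) z) (Nat.iter n (T d) (iota z)).
Proof.
  induction m; intros n z h.
  - pose proof (proj1 (L9 d n (iota z))) as K. rewrite iota_iota in K.
    apply K. apply rst_sym. exact h.
  - destruct n.
    + apply (proj1 (L9 d (S m) z)). exact h.
    + change (sim (tensor K2 G) (T d (Nat.iter m (T d) z)) (T d (Nat.iter n (T d) (iota z)))) in h.
      apply sim_T_inv in h. apply (IHm n z h).
Qed.
Definition E {G H : graph} (d : isod (tensor K2 G) (tensor K2 H)) (z z' : bool * vert G) :=
  exists m n, sim (tensor K2 G) (Nat.iter m (T d) z) (Nat.iter n (T d) z').

Section S1. End S1.

Lemma E_refl {G H : graph} (d : isod (tensor K2 G) (tensor K2 H)) z : E d z z.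
Proof. exists 0, 0. apply rst_refl. Qed.
Lemma E_sym {G H : graph} (d : isod (tensor K2 G) (tensor K2 H)) z z' : E d z z' -> E d z' z.
Proof. intros [m [n h]]. exists n, m. apply rst_sym, h. Qed.
Lemma E_trans {G H : graph} (d : isod (tensor K2 G) (tensor K2 H)) z z' z'' :
  E d z z' -> E d z' z'' -> E d z z''.
Proof.
  intros [a [b h1]] [c [e h2]]. exists (c + a), (b + e).
  rewrite !Nat.iter_add. eapply rst_trans.
  - apply (sim_iter d c) in h1. exact h1.
  - rewrite <- Nat.iter_add, Nat.add_comm, Nat.iter_add. apply sim_iter, h2.
Qed.
Lemma E_sim {G H : graph} (d : isod (tensor K2 G) (tensor K2 H)) z z' :
  sim (tensor K2 G) z z' -> E d z z'.
Proof. intro h. exists 0, 0. exact h. Qed.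
Lemma E_T {G H : graph} (d : isod (tensor K2 G) (tensor K2 H)) z : E d z (T d z).
Proof. exists 1, 0. apply rst_refl. Qed.
Lemma E_not {G H : graph} (d : isod (tensor K2 G) (tensor K2 H)) z : ~ E d z (iota z).
Proof. intros [m [n h]]. apply (L10 d m n z h). Qed.

Lemma iota_iterT {G H : graph} (d : isod (tensor K2 G) (tensor K2 H)) m (x : bool * vert G) :
  iota (Nat.iter m (T d) x) = Nat.iter m (Ti d) (iota x).
Proof.
  induction m; simpl; auto. rewrite <- IHm. reflexivity.
Qed.
Lemma iterT_Ti {G H : graph} (d : isod (tensor K2 G) (tensor K2 H)) m (x : bool * vert G) :
  Nat.iter m (T d) (Nat.iter m (Ti d) x) = x.
Proof.
  induction m; [reflexivity|]. rewrite (Nat.iter_succ_r m _ (T d)).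
  change (Nat.iter (S m) (Ti d) x) with (Ti d (Nat.iter m (Ti d) x)). rewrite T_Ti. exact IHm.
Qed.

Lemma E_iota {G H : graph} (d : isod (tensor K2 G) (tensor K2 H)) a b :
  E d a b -> E d (iota a) (iota b).
Proof.
  intros [m [n h]]. exists n, m.
  apply (sim_map (tensor K2 G) (tensor K2 G) (@iota (vert G)) (CN_iota G)) in h.
  rewrite !iota_iterT in h. apply (sim_iter d (n + m)) in h.
  rewrite Nat.iter_add, iterT_Ti in h. rewrite Nat.add_comm, Nat.iter_add, iterT_Ti in h.
  exact h.
Qed.

Definition P {G H : graph} (d : isod (tensor K2 G) (tensor K2 H)) (z : bool * vert G) :=
  fun y => E d z y \/ E d (iota z) y.
Definition r {G H : graph} (d : isod (tensor K2 G) (tensor K2 H)) (z : bool * vert G) :=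
  epsilon (inhabits z) (P d z).
Definition S {G H : graph} (d : isod (tensor K2 G) (tensor K2 H)) (z : bool * vert G) :=
  E d z (r d z).

Lemma r_spec {G H : graph} (d : isod (tensor K2 G) (tensor K2 H)) z : P d z (r d z).
Proof. unfold r. apply epsilon_spec. exists z. left. apply E_refl. Qed.
Lemma P_ext {G H : graph} (d : isod (tensor K2 G) (tensor K2 H)) z z' :
  E d z z' -> P d z = P d z'.
Proof.
  intro h. extensionality y. apply propositional_extensionality. unfold P; cbv beta.
  pose proof (E_iota d _ _ h) as hi.
  split; intros [k|k].
  - left. eapply E_trans; [apply E_sym, h|exact k].
  - right. eapply E_trans; [apply E_sym, hi|exact k].
  - left. eapply E_trans; [apply h|exact k].
  - right. eapply E_trans; [apply hi|exact k].
Qed.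
Lemma r_ext {G H : graph} (d : isod (tensor K2 G) (tensor K2 H)) z z' :
  E d z z' -> r d z = r d z'.
Proof.
  intro h. unfold r. rewrite (P_ext d z z' h). apply epsilon_inh_irrelevance.
  exists z'. left. apply E_refl.
Qed.
Lemma r_iota {G H : graph} (d : isod (tensor K2 G) (tensor K2 H)) z : r d (iota z) = r d z.
Proof.
  unfold r. assert (P d (iota z) = P d z) as ->.
  { extensionality y. apply propositional_extensionality. unfold P; cbv beta.
    rewrite iota_iota. tauto. }
  apply epsilon_inh_irrelevance. exists z. left. apply E_refl.
Qed.

Lemma S_or {G H : graph} (d : isod (tensor K2 G) (tensor K2 H)) z : S d z \/ S d (iota z).
Proof.
  destruct (r_spec d z) as [h|h]; [left; exact h|right; unfold S; rewrite r_iota; exact h].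
Qed.
Lemma S_not {G H : graph} (d : isod (tensor K2 G) (tensor K2 H)) z : ~ (S d z /\ S d (iota z)).
Proof.
  unfold S. rewrite r_iota. intros [h1 h2]. apply (E_not d z).
  eapply E_trans; [exact h1|apply E_sym, h2].
Qed.
Lemma S_E {G H : graph} (d : isod (tensor K2 G) (tensor K2 H)) z z' :
  E d z z' -> S d z -> S d z'.
Proof.
  intros h hs. unfold S in *. rewrite <- (r_ext d z z' h).
  eapply E_trans; [apply E_sym, h|exact hs].
Qed.
Lemma E_iota_J {G H : graph} (d : isod (tensor K2 G) (tensor K2 H)) z : E d (iota z) (J d z).
Proof.
  pose proof (E_T d (iota z)) as h. unfold T in h. rewrite iota_iota in h. exact h.
Qed.
Lemma S_J {G H : graph} (d : isod (tensor K2 G) (tensor K2 H)) z : S d z -> ~ S d (J d z).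
Proof.
  intros h1 h2. apply (S_not d z). split; auto.
  eapply S_E; [apply E_sym, E_iota_J|exact h2].
Qed.
Lemma S_J' {G H : graph} (d : isod (tensor K2 G) (tensor K2 H)) z : ~ S d z -> S d (J d z).
Proof.
  intros h1. destruct (S_or d z) as [h|h]; [contradiction|].
  eapply S_E; [apply E_iota_J|exact h].
Qed.
Definition pick {G H : graph} (d : isod (tensor K2 G) (tensor K2 H)) (v : vert G) : bool * vert G :=
  if excluded_middle_informative (S d (true, v)) then (true, v) else (false, v).
Definition pickH {G H : graph} (d : isod (tensor K2 G) (tensor K2 H)) (w : vert H) : bool * vert H :=
  if excluded_middle_informative (S d (psi d (true, w))) then (true, w) else (false, w).

Lemma pick_S {G H : graph} (d : isod (tensor K2 G) (tensor K2 H)) v : S d (pick d v).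
Proof.
  unfold pick. destruct excluded_middle_informative as [h|h]; auto.
  destruct (S_or d (true, v)); [contradiction|assumption].
Qed.
Lemma pick_snd {G H : graph} (d : isod (tensor K2 G) (tensor K2 H)) v : snd (pick d v) = v.
Proof. unfold pick. destruct excluded_middle_informative; reflexivity. Qed.
Lemma pick_unique {G H : graph} (d : isod (tensor K2 G) (tensor K2 H)) b v :
  S d (b, v) -> pick d v = (b, v).
Proof.
  intro h. unfold pick. destruct excluded_middle_informative as [h'|h'].
  - destruct b; auto. exfalso. apply (S_not d (true, v)). split; auto.
  - destruct b; auto. contradiction.
Qed.
Lemma J_psi {G H : graph} (d : isod (tensor K2 G) (tensor K2 H)) (c : bool) (w : vert H) :
  J d (psi d (c, w)) = psi d (negb c, w).
Proof. unfold J. rewrite phi_psi. reflexivity. Qed.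
Lemma pickH_S {G H : graph} (d : isod (tensor K2 G) (tensor K2 H)) w : S d (psi d (pickH d w)).
Proof.
  unfold pickH. destruct excluded_middle_informative as [h|h]; auto.
  apply S_J' in h. rewrite J_psi in h. exact h.
Qed.
Lemma pickH_unique {G H : graph} (d : isod (tensor K2 G) (tensor K2 H)) c w :
  S d (psi d (c, w)) -> pickH d w = (c, w).
Proof.
  intro h. unfold pickH. destruct excluded_middle_informative as [h'|h'].
  - destruct c; auto. exfalso. apply (S_J d _ h). rewrite J_psi. exact h'.
  - destruct c; auto. contradiction.
Qed.

Definition fv {G H : graph} (d : isod (tensor K2 G) (tensor K2 H)) (v : vert G) : vert H :=
  snd (phi d (pick d v)).
Definition gv {G H : graph} (d : isod (tensor K2 G) (tensor K2 H)) (w : vert H) : vert G :=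
  snd (psi d (pickH d w)).

Lemma gv_fv {G H : graph} (d : isod (tensor K2 G) (tensor K2 H)) v : gv d (fv d v) = v.
Proof.
  unfold fv, gv. pose proof (pick_S d v) as hs.
  destruct (phi d (pick d v)) as [c w] eqn:e. change (snd (c, w)) with w.
  assert (psi d (c, w) = pick d v) as e2.
  { rewrite <- e. apply psi_phi. }
  rewrite pickH_unique with (c := c).
  - rewrite e2. apply pick_snd.
  - rewrite e2. exact hs.
Qed.
Lemma fv_gv {G H : graph} (d : isod (tensor K2 G) (tensor K2 H)) w : fv d (gv d w) = w.
Proof.
  unfold fv, gv. pose proof (pickH_S d w) as hs.
  assert (snd (pickH d w) = w) as hw.
  { unfold pickH. destruct excluded_middle_informative; reflexivity. }
  destruct (psi d (pickH d w)) as [b v] eqn:e. change (snd (b, v)) with v.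
  rewrite (pick_unique d b v hs).
  transitivity (snd (phi d (psi d (pickH d w)))).
  { rewrite e. reflexivity. }
  rewrite phi_psi. exact hw.
Qed.

Lemma sig_eq {A} (Q : A -> Prop) (a b : sig Q) : proj1_sig a = proj1_sig b -> a = b.
Proof.
  destruct a as [a pa], b as [b pb]; simpl. intro; subst. f_equal. apply proof_irrelevance.
Qed.

Lemma dir1 (G H : graph) (hG : no_isolated G) (hH : no_isolated H) :
  graph_iso (tensor K2 G) (tensor K2 H) -> nc_iso G H.
Proof.
  intros [ph [ps [e1 [e2 e3]]]].
  pose (d := Build_isod _ _ ph ps e1 e2 e3).
  pose (f := fun x : nc_vertex G => exist (fun v => ~ isolated H v) (fv d (proj1_sig x)) (hH _)).
  pose (g := fun y : nc_vertex H => exist (fun v => ~ isolated G v) (gv d (proj1_sig y)) (hG _)).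
  assert (gf : forall x, g (f x) = x).
  { intro x. apply sig_eq. simpl. apply gv_fv. }
  assert (fg : forall y, f (g y) = y).
  { intro y. apply sig_eq. simpl. apply fv_gv. }
  assert (fwd : forall s, nc_simplex G s -> nc_simplex H (map f s)).
  { intros s [u hu].
    destruct (not_all_not_ex _ _ (hG u)) as [w0 hw0].
    set (b := fst (pick d w0)).
    assert (hp : forall x, adj G u x -> pick d x = (b, x)).
    { intros x hx. apply pick_unique. apply (S_E d (b, w0)).
      - apply E_sim. apply rst_step. exists (negb b, u).
        split; split; simpl; try (destruct b; discriminate); apply adj_sym; auto.
      - assert (pick d w0 = (b, w0)) as <-.
        { pose proof (pick_snd d w0). destruct (pick d w0); simpl in *; subst; auto. }
        apply pick_S. }
    exists (snd (phi d (negb b, u))).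
    intros y hy. apply in_map_iff in hy. destruct hy as [x [<- hx]].
    simpl. unfold fv. rewrite (hp _ (hu x hx)).
    assert (adj (tensor K2 G) (negb b, u) (b, proj1_sig x)) as ha.
    { split; simpl; [destruct b; discriminate | apply hu; auto]. }
    apply (phi_adj d) in ha. destruct ha as [_ ha]. exact ha. }
  assert (bwd : forall t, nc_simplex H t -> nc_simplex G (map g t)).
  { intros t [w hw].
    destruct (not_all_not_ex _ _ (hH w)) as [w1 hw1].
    set (c := fst (pickH d w1)).
    assert (hp : forall y, adj H w y -> pickH d y = (c, y)).
    { intros y hy. apply pickH_unique. apply (S_E d (psi d (c, w1))).
      - apply E_sim. apply rst_step. apply CN_psi. exists (negb c, w).
        split; split; simpl; try (destruct c; discriminate); apply adj_sym; auto.
      - assert (pickH d w1 = (c, w1)) as <-.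
        { assert (snd (pickH d w1) = w1).
          { unfold pickH. destruct excluded_middle_informative; reflexivity. }
          destruct (pickH d w1); simpl in *; subst; auto. }
        apply pickH_S. }
    exists (snd (psi d (negb c, w))).
    intros x hx. apply in_map_iff in hx. destruct hx as [y [<- hy]].
    simpl. unfold gv. rewrite (hp _ (hw y hy)).
    assert (adj (tensor K2 H) (negb c, w) (c, proj1_sig y)) as ha.
    { split; simpl; [destruct c; discriminate | apply hw; auto]. }
    rewrite <- (phi_psi d (negb c, w)), <- (phi_psi d (c, proj1_sig y)) in ha.
    apply (phi_adj d) in ha. destruct ha as [_ ha]. exact ha. }
  exists f, g. split; [exact gf|split; [exact fg|]].
  intro s. split; [apply fwd|].
  intro h. apply bwd in h. rewrite map_map in h.
  rewrite (map_ext _ (fun x => x) gf), map_id in h. exact h.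
Qed.
Definition adjb (X : graph) (v w : vert X) : bool :=
  if excluded_middle_informative (adj X v w) then true else false.
Lemma adjb_true X v w : adjb X v w = true <-> adj X v w.
Proof. unfold adjb. destruct excluded_middle_informative; split; auto; discriminate. Qed.

Lemma build_h (G H : graph) (hG : no_isolated G) (hH : no_isolated H)
  (lfG : locally_finite G) (lfH : locally_finite H) (stG : stiff G)
  (f : nc_vertex G -> nc_vertex H) (g : nc_vertex H -> nc_vertex G)
  (gf : forall x, g (f x) = x) (fg : forall y, f (g y) = y)
  (simp : forall s, nc_simplex G s <-> nc_simplex H (map f s)) :
  exists h : vert G -> vert H, forall v x,
    adj G v x <-> adj H (h v) (proj1_sig (f (exist _ x (hG x)))).
Proof.
  pose (liftG := fun x : vert G => exist (fun v => ~ isolated G v) x (hG x)).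
  pose (liftH := fun x : vert H => exist (fun v => ~ isolated H v) x (hH x)).
  assert (A : forall v, exists u, forall x, adj G v x -> adj H u (proj1_sig (f (liftG x)))).
  { intro v. destruct (lfG v) as [l hl].
    pose (sv := map liftG (filter (adjb G v) l)).
    assert (hs : nc_simplex G sv).
    { exists v. intros x hx. unfold sv in hx. apply in_map_iff in hx.
      destruct hx as [y [<- hy]]. apply filter_In in hy. apply adjb_true, hy. }
    apply simp in hs. destruct hs as [u hu]. exists u. intros x hx. apply hu.
    apply in_map. unfold sv. apply in_map. apply filter_In. split; auto.
    apply adjb_true; auto. }
  pose (h := fun v => proj1_sig (constructive_indefinite_description _ (A v))).
  assert (hspec : forall v x, adj G v x -> adj H (h v) (proj1_sig (f (liftG x)))).
  { intro v. exact (proj2_sig (constructive_indefinite_description _ (A v))). }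
  exists h. intros v x. split; [apply hspec|].
  intro ha.
  destruct (lfH (h v)) as [l hl].
  pose (t := map liftH (filter (adjb H (h v)) l)).
  assert (ht : nc_simplex H t).
  { exists (h v). intros y hy. unfold t in hy. apply in_map_iff in hy.
    destruct hy as [z [<- hz]]. apply filter_In in hz. apply adjb_true, hz. }
  assert (ht' : nc_simplex G (map g t)).
  { apply simp. rewrite map_map. rewrite (map_ext _ (fun x => x) fg), map_id. exact ht. }
  destruct ht' as [v' hv'].
  assert (mem : forall x, adj H (h v) (proj1_sig (f (liftG x))) -> adj G v' x).
  { intros y hy. specialize (hv' (liftG y)). apply hv'.
    rewrite <- (gf (liftG y)). apply in_map. unfold t.
    assert (f (liftG y) = liftH (proj1_sig (f (liftG y)))) as ->.
    { apply sig_eq. reflexivity. }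
    apply in_map. apply filter_In. split; auto. apply adjb_true; auto. }
  assert (v = v') as <-.
  { apply stG. intros y hy. apply mem, hspec, hy. }
  apply mem. exact ha.
Qed.

Lemma dir2 (G H : graph) (hG : no_isolated G) (hH : no_isolated H) :
  locally_finite G -> locally_finite H -> stiff G -> stiff H ->
   nc_iso G H -> graph_iso (tensor K2 G) (tensor K2 H).
Proof.
  intros lfG lfH stG stH [f [g [gf [fg simp]]]].
  assert (simp' : forall t, nc_simplex H t <-> nc_simplex G (map g t)).
  { intro t. rewrite simp, map_map, (map_ext _ (fun x => x) fg), map_id. tauto. }
  destruct (build_h G H hG hH lfG lfH stG f g gf fg simp) as [h hs].
  destruct (build_h H G hH hG lfH lfG stH g f fg gf simp') as [h' hs'].
  pose (F := fun x : vert G => proj1_sig (f (exist _ x (hG x)))).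
  pose (G' := fun y : vert H => proj1_sig (g (exist _ y (hH y)))).
  assert (FG : forall y, F (G' y) = y).
  { intro y. unfold F, G'. rewrite (sig_eq _ (exist _ _ _) (g (exist _ y (hH y))) eq_refl).
    rewrite fg. reflexivity. }
  assert (GF : forall x, G' (F x) = x).
  { intro x. unfold F, G'. rewrite (sig_eq _ (exist _ _ _) (f (exist _ x (hG x))) eq_refl).
    rewrite gf. reflexivity. }
  assert (hh : forall v, h' (h v) = v).
  { intro v. symmetry. apply stG. intros x hx. apply hs in hx. apply hs' in hx.
    change (adj G (h' (h v)) (G' (F x))) in hx. rewrite GF in hx. exact hx. }
  assert (hh' : forall u, h (h' u) = u).
  { intro u. symmetry. apply stH. intros x hx. apply hs' in hx. apply hs in hx.
    change (adj H (h (h' u)) (F (G' x))) in hx. rewrite FG in hx. exact hx. }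
  pose (Phi := fun p : bool * vert G =>
    if fst p then (true, h (snd p)) else (false, F (snd p))).
  pose (Psi := fun q : bool * vert H =>
    if fst q then (true, h' (snd q)) else (false, G' (snd q))).
  exists (Phi : vert (tensor K2 G) -> vert (tensor K2 H)), (Psi : vert (tensor K2 H) -> vert (tensor K2 G)).
  split; [|split].
  - intros [[|] v]; unfold Psi, Phi; simpl; [rewrite hh|rewrite GF]; reflexivity.
  - intros [[|] v]; unfold Psi, Phi; simpl; [rewrite hh'|rewrite FG]; reflexivity.
  - intros [[|] v1] [[|] v2]; unfold Phi; simpl.
    + split; intros [a _]; congruence.
    + rewrite (hs v1 v2). fold F. tauto.
    + split; intros [a b]; split; auto.
      * apply adj_sym. apply (proj1 (hs v2 v1)). apply adj_sym. exact b.
      * apply adj_sym. apply (proj2 (hs v2 v1)). apply adj_sym. exact b.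
    + split; intros [a _]; congruence.
Qed.

Theorem theorem1p1 (G H : graph) (hG : no_isolated G) (hH : no_isolated H) :
  (graph_iso (tensor K2 G) (tensor K2 H) -> nc_iso G H) /\
  (locally_finite G -> locally_finite H -> stiff G -> stiff H ->
   nc_iso G H -> graph_iso (tensor K2 G) (tensor K2 H)).
Proof.
  split; [apply dir1 | apply dir2]; assumption.
Qed.
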